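(* Let $G$ be a very well-covered graph with $V(G)=\{x_1,\ldots,x_h,y_1,\ldots,y_h\}$ such that $\{x_1,\ldots,x_h\}$ is a minimal vertex cover, $\{y_1,\ldots,y_h\}$ is a maximal independent set, and $\{x_i,y_i\}\in E(G)$ for all $i$. Let $s\ge1$, let $e_1,\ldots,e_s\in E(G)$ and let $G'$ be the graph associated to $(I(G)^{s+1}:e_1\cdots e_s)$ as described in the context. Let $i,j,k$ be distinct and $t_i\in\{x_i,y_i\}$. If $\{t_i,x_j\}\in E(G')$ and $\{y_j,x_k\}\in E(G')$, then $\{t_i,x_k\}\in E(G')$ or $\{t_i,y_j\}\in E(G')$.
   Context: $I(G)=(uv\mid\{u,v\}\in E(G))$ is the edge ideal; edges are identified with the products of their endpoints. $G$ is very well-covered if it has no isolated vertices, all minimal vertex covers have the same size, and this size is $|V(G)|/2$. Even-connection: vertices $u,v$ (possibly equal) are even-connected with respect to $e_1\cdots e_s$ if there is a sequence $p_0p_1\cdots p_{2k+1}$, $k\ge1$, of vertices with $p_0=u$, $p_{2k+1}=v$, $\{p_r,p_{r+1}\}\in E(G)$ for all $0\le r\le 2k$, each $\{p_{2\ell+1},p_{2\ell+2}\}$ ($0\le\ell\le k-1$) equal to some $e_m$, and each edge appearing among the $\{p_{2\ell+1},p_{2\ell+2}\}$ at most as many times as it appears in the list $e_1,\dots,e_s$. It is known that $(I(G)^{s+1}:e_1\cdots e_s)$ is minimally generated by the monomials $uv$ with $\{u,v\}\in E(G)$ or $u,v$ even-connected with respect to $e_1\cdots e_s$. Its polarization replaces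 each generator $u^2$ by $u\,u^*$ with a new variable $u^*$; $G'$ is the graph (on $V(G)$ together with the new vertices $u^*$) whose edge ideal is this polarization. Thus for $u\ne v$ in $V(G)$, $\{u,v\}\in E(G')$ iff $\{u,v\}\in E(G)$ or $u,v$ are even-connected. *)

(* Defs.v *)
From mathcomp Require Import all_boot.
Set Implicit Arguments. Unset Strict Implicit. Unset Printing Implicit Defensive.

Definition simple_graph (T : finType) (e : rel T) : Prop :=
  symmetric e /\ irreflexive e.

Definition vertex_cover (T : finType) (e : rel T) (C : {set T}) : Prop :=
  forall u v, e u v -> (u \in C) || (v \in C).

Definition minimal_vertex_cover (T : finType) (e : rel T) (C : {set T}) : Prop :=
  vertex_cover e C /\ forall D : {set T}, D \proper C -> ~ vertex_cover e D.

Definition independent_set (T : finType) (e : rel T) (S : {set T}) : Prop :=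
  forall u v, u \in S -> v \in S -> ~~ e u v.

Definition maximal_independent_set (T : finType) (e : rel T) (S : {set T}) : Prop :=
  independent_set e S /\ forall S' : {set T}, S \proper S' -> ~ independent_set e S'.

Definition very_well_covered (T : finType) (e : rel T) : Prop :=
  (forall v, exists w, e v w) /\
  (forall C : {set T}, minimal_vertex_cover e C -> (#|C| * 2 = #|T|)%N).

Definition same_edge (T : eqType) (f g : T * T) : bool :=
  ((f.1 == g.1) && (f.2 == g.2)) || ((f.1 == g.2) && (f.2 == g.1)).

(* u and v (possibly equal) are even-connected w.r.t. the product of the edges
   in the list es = [e_1; ...; e_s]: there is a walk p_0 p_1 ... p_{2k+1},
   k >= 1, p_0 = u, p_{2k+1} = v, consecutive vertices adjacent, each
   {p_{2l+1}, p_{2l+2}} (0 <= l <= k-1) is one of the e_m, and each edge occurs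
   among these at most as many times as in the list es. *)
Definition even_connected (T : finType) (e : rel T) (es : seq (T * T)) (u v : T) : Prop :=
  exists (k : nat) (p : nat -> T),
    (1 <= k)%N /\ [/\ p 0%N = u, p k.*2.+1 = v,
        (forall r, (r < k.*2.+1)%N -> e (p r) (p r.+1)),
        (forall l, (l < k)%N -> has (same_edge (p l.*2.+1, p l.*2.+2)) es) &
        (forall f : T * T,
          (count (same_edge f) [seq (p l.*2.+1, p l.*2.+2) | l <- iota 0 k]
            <= count (same_edge f) es)%N)].

Definition Gprime_edge (T : finType) (e : rel T) (es : seq (T * T)) (u v : T) : Prop :=
  u <> v /\ (e u v \/ even_connected e es u v).

(* Main.v *)
Require Import Defs.
From mathcomp Require Import all_boot zify.
Set Implicit Arguments. Unset Strict Implicit. Unset Printing Implicit Defensive.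

Fixpoint chain (T : finType) (e : rel T) (u : T) (L : seq (T * T)) (v : T) : bool :=
  if L is q :: L' then e u q.1 && chain e q.2 L' v else e u v.

Definition firstv (T : finType) (L : seq (T * T)) (v : T) : T :=
  if L is q :: _ then q.1 else v.

Definition revs (T : finType) (L : seq (T * T)) : seq (T * T) :=
  rev (map (fun q => (q.2, q.1)) L).

Lemma chain_cat (T : finType) (e : rel T) u L1 q L2 v :
  chain e u (L1 ++ q :: L2) v = chain e u L1 q.1 && chain e q.2 L2 v.
Proof. by elim: L1 u => [|r L1 IH] u //=; rewrite IH andbA. Qed.

Lemma chain_last (T : finType) (e : rel T) u L v :
  chain e u L v -> e (last u (map snd L)) v.
Proof. by elim: L u => [|r L IH] u //= /andP[_ /IH]. Qed.

Lemma chain_last_change (T : finType) (e : rel T) u L v w :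
  chain e u L v -> e (last u (map snd L)) w -> chain e u L w.
Proof. by elim: L u => [|r L IH] u //= /andP[-> /IH]. Qed.

Lemma chain_first (T : finType) (e : rel T) u L v :
  chain e u L v -> e u (firstv L v).
Proof. by case: L => [|r L] //= /andP[]. Qed.

Lemma chain_first_change (T : finType) (e : rel T) u L v w :
  chain e u L v -> e w (firstv L v) -> chain e w L v.
Proof. by case: L => [|r L] //= /andP[_ ->] ->. Qed.

Lemma chain_app (T : finType) (e : rel T) u L1 L2 v w :
  chain e u L1 (firstv L2 v) -> chain e w L2 v -> chain e u (L1 ++ L2) v.
Proof.
elim: L1 u => [|r L1 IH] u /=.
  by move=> H1 H2; apply: chain_first_change H2 H1.
by move=> /andP[-> H] H2; rewrite (IH _ H H2).
Qed.

Lemma chain_rev (T : finType) (e : rel T) u L v :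
  symmetric e -> chain e u L v -> chain e v (revs L) u.
Proof.
move=> se; elim: L u => [|[a b] L IH] u /=; first by rewrite se.
move=> /andP[Hua /IH H].
by rewrite /revs map_cons rev_cons -cats1 chain_cat /= H se.
Qed.

Lemma se_refl (T : eqType) (f : T * T) : same_edge f f.
Proof. by rewrite /same_edge !eqxx. Qed.

Lemma se_sym (T : eqType) (f g : T * T) : same_edge f g = same_edge g f.
Proof.
case: f g => a b [c d]; rewrite /same_edge /=.
by rewrite (eq_sym c a) (eq_sym d b) (eq_sym c b) (eq_sym d a) (andbC (b == c)).
Qed.

Lemma se_trans (T : eqType) (f g k : T * T) :
  same_edge f g -> same_edge g k -> same_edge f k.
Proof.
case: f g k => a b [c d] [m n]; rewrite /same_edge /=.
by move=> /orP[/andP[/eqP-> /eqP->]|/andP[/eqP-> /eqP->]]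
  /orP[/andP[/eqP-> /eqP->]|/andP[/eqP-> /eqP->]]; rewrite !eqxx ?orbT.
Qed.

Lemma se_eq (T : eqType) (f g : T * T) : same_edge f g -> same_edge f =1 same_edge g.
Proof.
move=> H r; apply/idP/idP => H'.
  by apply: se_trans H'; rewrite se_sym.
by apply: se_trans H H'.
Qed.

Lemma se_swap (T : eqType) (f : T * T) a b :
  same_edge f (b, a) = same_edge f (a, b).
Proof. by case: f => c d; rewrite /same_edge /= orbC. Qed.

Lemma count_revs (T : finType) (f : T * T) L :
  count (same_edge f) (revs L) = count (same_edge f) L.
Proof.
rewrite /revs count_rev count_map; apply: eq_count => -[a b] /=.
by rewrite /preim /= se_swap.
Qed.

Lemma chain_of_fun (T : finType) (e : rel T) (p : nat -> T) n m :
  (forall r, r < n.*2.+1 -> e (p (m.*2 + r)) (p (m.*2 + r).+1)) ->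
  chain e (p m.*2) [seq (p l.*2.+1, p l.*2.+2) | l <- iota m n] (p (m + n).*2.+1).
Proof.
elim: n m => [|n IH] m H /=.
  by have := H 0 isT; rewrite !addn0.
apply/andP; split; first by have := H 0 isT; rewrite !addn0.
have := IH m.+1; rewrite doubleS addSnnS; apply => r Hr.
have E : m.+1.*2 + r = m.*2 + r.+2 by rewrite doubleS; lia.
rewrite E; apply: H; move: Hr; rewrite ?doubleS; lia.
Qed.

Fixpoint pf (T : finType) (u : T) (L : seq (T * T)) (v : T) (r : nat) : T :=
  match L with
  | [::] => if r is 0 then u else v
  | q :: L' => match r with 0 => u | 1 => q.1 | r'.+2 => pf q.2 L' v r' end
  end.

Lemma pf0 (T : finType) (u : T) L v : pf u L v 0 = u.
Proof. by case: L. Qed.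

Lemma pf_end (T : finType) (u : T) L v : pf u L v (size L).*2.+1 = v.
Proof. by elim: L u => [|q L IH] u //=; rewrite doubleS /= IH. Qed.

Lemma pf_adj (T : finType) (e : rel T) (u : T) L v :
  (forall q, q \in L -> e q.1 q.2) -> chain e u L v ->
  forall r, r < (size L).*2.+1 -> e (pf u L v r) (pf u L v r.+1).
Proof.
elim: L u => [|q L IH] u /= HL.
  by move=> H [|r].
move=> /andP[H1 H2] [|[|r]] //=.
- by rewrite pf0 => _; apply: HL; rewrite inE eqxx.
- rewrite doubleS ltnS ltnS => Hr; apply: IH => // q' Hq'.
  by apply: HL; rewrite inE Hq' orbT.
Qed.

Lemma pf_map (T : finType) (u : T) L v :
  [seq (pf u L v l.*2.+1, pf u L v l.*2.+2) | l <- iota 0 (size L)] = L.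
Proof.
elim: L u => [|[a b] L IH] u //=.
rewrite pf0 -(addn0 1) iotaDl -map_comp -[in RHS](IH b); congr (_ :: _).
Qed.

Definition W (T : finType) (e : rel T) (es : seq (T * T)) u L v :=
  chain e u L v /\ forall f, count (same_edge f) L <= count (same_edge f) es.

Lemma gprime_W (T : finType) (e : rel T) es u v :
  Gprime_edge e es u v -> exists L, W e es u L v.
Proof.
move=> [_ [H|[k [p [_ [H0 H1 Hadj Hhas Hcnt]]]]]].
  by exists [::]; split => // f; rewrite /= leq0n.
exists [seq (p l.*2.+1, p l.*2.+2) | l <- iota 0 k]; split => //.
have := @chain_of_fun T e p k 0; rewrite H0 add0n H1; apply => r Hr.
by rewrite add0n; apply: Hadj.
Qed.

Lemma W_has (T : finType) (e : rel T) es u L v :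
  W e es u L v -> forall q, q \in L -> has (same_edge q) es.
Proof.
move=> [_ Hc] q Hq; rewrite has_count; apply: leq_trans (Hc q).
by rewrite -has_count; apply/hasP; exists q => //; apply: se_refl.
Qed.

Lemma has_edge (T : finType) (e : rel T) es q :
  symmetric e -> (forall f, f \in es -> e f.1 f.2) -> has (same_edge q) es -> e q.1 q.2.
Proof.
move=> se Hes /hasP[[c d] /Hes /= Hcd].
case: q => a b; rewrite /same_edge /=.
by move=> /orP[/andP[/eqP-> /eqP->]|/andP[/eqP-> /eqP->]] //; rewrite se.
Qed.

Lemma W_gprime (T : finType) (e : rel T) es u L v :
  symmetric e -> (forall f, f \in es -> e f.1 f.2) ->
  u <> v -> W e es u L v -> Gprime_edge e es u v.
Proof.
move=> se Hes Huv HW; split => //.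
have HL : forall q, q \in L -> e q.1 q.2.
  by move=> q Hq; apply: (has_edge se Hes); apply: W_has HW q Hq.
case: L HW HL => [|q0 L0] HW HL; first by left; case: HW.
set L := q0 :: L0.
right; exists (size L), (pf u L v); split => //; split.
- exact: pf0.
- exact: pf_end.
- by apply: pf_adj => //; case: HW.
- move=> l Hl; apply: (W_has HW); rewrite -[X in _ \in X](pf_map u L v).
  by apply/mapP; exists l => //; rewrite mem_iota.
- by move=> f; rewrite pf_map; case: HW.
Qed.

Definition indep (T : finType) (e : rel T) (A : {set T}) : bool :=
  [forall u, forall v, ((u \in A) && (v \in A)) ==> ~~ e u v].

Lemma indepP (T : finType) (e : rel T) (A : {set T}) :
  reflect (forall u v, u \in A -> v \in A -> ~~ e u v) (indep e A).
Proof.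
apply: (iffP forallP) => H.
  by move=> u v Hu Hv; move/forallP/(_ v)/implyP: (H u); apply; rewrite Hu Hv.
by move=> u; apply/forallP => v; apply/implyP => /andP[]; apply: H.
Qed.

Lemma propA (T : finType) (e : rel T) (h : nat) (x y : 'I_h -> T) :
  simple_graph e -> very_well_covered e -> injective x -> injective y ->
  (forall a b, x a <> y b) -> (forall v, exists a, v = x a \/ v = y a) ->
  (forall a, e (x a) (y a)) ->
  forall w j z, e w (x j) -> e (y j) z -> e w z.
Proof.
move=> [se ie] [_ Hvwc] injx injy xy cov exy w j z Hwj Hjz.
case Ewz: (e w z) => //; exfalso.
have HS : indep e [set w; z].
  apply/indepP => u v; rewrite !inE => /orP[]/eqP-> /orP[]/eqP->;
    by rewrite ?ie ?Ewz // se Ewz.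
have [M /maxsetP [HM Hmax] HSM] := @maxset_exists T (indep e) _ HS.
have wM : w \in M by apply: (subsetP HSM); rewrite !inE eqxx.
have zM : z \in M by apply: (subsetP HSM); rewrite !inE eqxx orbT.
have /indepP HMi := HM.
have Hmvc : minimal_vertex_cover e (~: M).
  split.
    move=> u v Euv; rewrite !inE -negb_and; apply/negP => /andP[Hu Hv].
    by move: (HMi u v Hu Hv); rewrite Euv.
  move=> D /properP [HD [v HvC HvD]] Dcov.
  have HB : indep e (v |: M).
    apply/indepP => u u'; rewrite !inE => /orP[/eqP->|Hu] /orP[/eqP->|Hu'].
    - by rewrite ie.
    - apply/negP => Evu; move: (Dcov _ _ Evu); rewrite (negbTE HvD) /=.
      by move/(subsetP HD); rewrite inE Hu'.
    - apply/negP => Euv; move: (Dcov _ _ Euv); rewrite (negbTE HvD) orbF.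
      by move/(subsetP HD); rewrite inE Hu.
    - exact: HMi.
  have := Hmax _ HB; rewrite subsetUr => /(_ isT) EB.
  by move: HvC; rewrite inE -EB setU11.
have Hcard := Hvwc _ Hmvc.
pose g := fun p : 'I_h * bool => if p.2 then y p.1 else x p.1.
have ginj : injective g.
  move=> [a [|]] [b [|]] /=; rewrite /g /=.
  - by move/injy->.
  - by move=> E; exfalso; apply: (xy b a); rewrite E.
  - by move=> E; exfalso; apply: (xy a b).
  - by move/injx->.
have HT : #|T| = h * 2.
  have : [set g p | p in {: 'I_h * bool}] = setT.
    apply/setP => v; rewrite inE; have [a [->|->]] := cov v.
      by apply/imsetP; exists (a, false).
    by apply/imsetP; exists (a, true).
  move/(congr1 (fun A : {set T} => #|A|)); rewrite card_imset // cardsT.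
  by rewrite card_prod card_ord card_bool => <-.
have HMc : #|M| = h.
  have := cardsC M; lia.
pose ix := fun v : T => odflt j [pick a | (v == x a) || (v == y a)].
have ixP : forall v, v = x (ix v) \/ v = y (ix v).
  move=> v; rewrite /ix; case: pickP => [a /orP[]/eqP|] /=; [by left|by right|].
  by move=> H; have [a [E|E]] := cov v; move: (H a); rewrite E eqxx ?orbT.
have ixinj : {in M &, injective ix}.
  move=> u v Hu Hv Euv.
  have [Eu|Eu] := ixP u; have [Ev|Ev] := ixP v; rewrite Eu Ev -Euv //.
  - by move: (HMi u v Hu Hv); rewrite {1}Eu {1}Ev -Euv exy.
  - by move: (HMi v u Hv Hu); rewrite {1}Eu {1}Ev -Euv exy.
have Himg : [set ix v | v in M] = setT.
  apply/eqP; rewrite eqEcard subsetT cardsT card_ord card_in_imset // HMc.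
  by rewrite leqnn.
have : j \in [set ix v | v in M] by rewrite Himg inE.
move=> /imsetP [v vM Ejv].
have [Ev|Ev] := ixP v; rewrite -Ejv in Ev; subst v.
- by move: (HMi _ _ wM vM); rewrite Hwj.
- by move: (HMi _ _ vM zM); rewrite Hjz.
Qed.

Lemma split_first (X : Type) (p : pred X) s :
  has p s -> exists s1 a s2, s = s1 ++ a :: s2 /\ p a /\ ~~ has p s1.
Proof.
elim: s => [|a s IH] //= /orP[Ha|Hs].
  by exists [::], a, s.
case Ha: (p a); first by exists [::], a, s.
have [s1 [b [s2 [-> [Hb Hs1]]]]] := IH Hs.
by exists (a :: s1), b, s2; rewrite /= Ha.
Qed.

Lemma count0 (X : Type) (p : pred X) s : ~~ has p s -> count p s = 0.
Proof. by rewrite has_count -leqNgt leqn0 => /eqP. Qed.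

Lemma comb (T : finType) (e : rel T) es u m1 m2 v LQ LP :
  symmetric e -> W e es u LQ m1 -> W e es m2 LP v ->
  (forall w z, e w m1 -> e m2 z -> e w z) ->
  exists L, W e es u L v \/ W e es u L m2.
Proof.
move=> se [chQ cQ] [chP cP] Hj.
case: (boolP (has (fun q => has (same_edge q) LP) LQ)) => Hov.
- have [Q1 [[a b] [Q2 [EQ [HabP HQ1]]]]] := split_first Hov.
  have [P1 [[c d] [P2 [EP [Hcd HP1]]]]] := split_first HabP.
  move: chQ chP; rewrite EQ EP !chain_cat /= => /andP[chQ1 chQ2] /andP[chP1 chP2].
  have key : forall f, has (same_edge f) Q1 ->
      count (same_edge f) LP = 0 /\ same_edge f (a, b) = false.
    move=> f /hasP [q qQ1 Hfq].
    have Hq : ~~ has (same_edge q) LP by move/hasPn: HQ1; apply.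
    have E := eq_has (se_eq Hfq) LP.
    split; first by apply: count0; rewrite E.
    apply/negP => Hfab; move/negP: Hq; apply.
    by rewrite -E (eq_has (se_eq Hfab)).
  move: Hcd; rewrite /same_edge /= => /orP[/andP[/eqP Ec /eqP Ed]|/andP[/eqP Ed /eqP Ec]];
    subst c d.
  + exists (Q1 ++ (a, b) :: P2); left; split.
      by rewrite chain_cat /= chQ1.
    move=> f; have := cQ f; have := cP f; rewrite EQ EP !count_cat /=.
    case: (boolP (has (same_edge f) Q1)) => Hf.
      have [H1 H2] := key f Hf; move: H1; rewrite EP count_cat /= H2; lia.
    rewrite (count0 Hf); case: (same_edge f (a, b)) => /=; lia.
  + exists (Q1 ++ (a, b) :: revs P1); right; split.
      by rewrite chain_cat /= chQ1 (chain_rev se chP1).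
    move=> f; have := cQ f; have := cP f; rewrite EQ EP !count_cat /= count_revs.
    rewrite se_swap.
    case: (boolP (has (same_edge f) Q1)) => Hf.
      have [H1 H2] := key f Hf; move: H1; rewrite EP count_cat /= se_swap H2; lia.
    rewrite (count0 Hf); case Hfab: (same_edge f (a, b)) => /=; last by lia.
    rewrite (eq_count (se_eq Hfab)) (count0 HP1); lia.
- pose w := last u (map snd LQ); pose z := firstv LP v.
  have Hwz : e w z by apply: Hj; [apply: chain_last chQ|apply: chain_first chP].
  exists (LQ ++ LP); left; split.
    apply: chain_app chP; exact: chain_last_change chQ Hwz.
  move=> f; rewrite count_cat; have := cQ f; have := cP f.
  case: (boolP (has (same_edge f) LQ)) => Hf.
    move/hasP: Hf => [q qQ Hfq].
    have Hq : ~~ has (same_edge q) LP by move/hasPn: Hov; apply.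
    rewrite (@count0 _ _ LP); first lia.
    by rewrite (eq_has (se_eq Hfq)).
  rewrite (count0 Hf); lia.
Qed.

Theorem lemma4p2 (T : finType) (e : rel T) (h : nat) (x y : 'I_h -> T)
    (es : seq (T * T)) (i j k : 'I_h) (ti : T) :
  simple_graph e ->
  very_well_covered e ->
  injective x -> injective y ->
  (forall a b, x a <> y b) ->
  (forall v : T, exists a, v = x a \/ v = y a) ->
  minimal_vertex_cover e [set x a | a in 'I_h] ->
  maximal_independent_set e [set y a | a in 'I_h] ->
  (forall a, e (x a) (y a)) ->
  (1 <= size es)%N ->
  (forall f, f \in es -> e f.1 f.2) ->
  i != j -> j != k -> i != k ->
  (ti = x i \/ ti = y i) ->
  Gprime_edge e es ti (x j) ->
  Gprime_edge e es (y j) (x k) ->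
  Gprime_edge e es ti (x k) \/ Gprime_edge e es ti (y j).
Proof.
move=> sg vwc injx injy xy cov _ _ exy _ Hes ij jk ik Hti Hg1 Hg2.
have se : symmetric e by case: sg.
have [LQ HQ] := gprime_W Hg1.
have [LP HP] := gprime_W Hg2.
have Hj := propA sg vwc injx injy xy cov exy (j := j).
have [L [HL|HL]] := comb se HQ HP Hj.
- left; apply: (W_gprime se Hes _ HL).
  case: Hti => ->.
    by move/injx => E; rewrite E eqxx in ik.
  by move=> E; apply: (xy k i); rewrite E.
- right; apply: (W_gprime se Hes _ HL).
  case: Hti => ->.
    exact: xy.
  by move/injy => E; rewrite E eqxx in ij.
Qed.
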